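(* Let $A(z)=\sum_{n\ge0}a_nz^n$ be the generating function of Dyck arches ending with a catastrophe. Then for $n\ge2$, $a_n=\binom{n-2}{\lfloor\frac{n-3}{2}\rfloor}$ (and $a_0=a_1=0$), and \[A(z)=z\,\frac{M(z)-E(z)-M_1(z)}{E(z)}=\frac12\,\frac{2z^2+z-1+\sqrt{(1-2z)(1+2z)(1-z)^2}}{1-2z}=z^3+z^4+3z^5+4z^6+10z^7+15z^8+35z^9+O(z^{10}),\] where $M(z)$, $E(z)$, $M_1(z)$ are the generating functions (by length) of classical Dyck meanders, Dyck excursions, and Dyck meanders ending at altitude $1$, respectively.
   Context: Classical Dyck paths use steps $+1$ and $-1$ (each of weight $1$) and never go below altitude $0$, starting at $0$; a Dyck meander may end anywhere, a Dyck excursion ends at $0$. A Dyck path with catastrophes additionally allows catastrophes: steps from an altitude $h>1$ directly to altitude $0$ (weight $1$). A Dyck arch ending with a catastrophe is a Dyck path with catastrophes starting at altitude $0$ whose last step is a catastrophe and which does not visit altitude $0$ between its start and its end. *)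

(* Defs.v *)
From HB Require Import structures.
From mathcomp Require Import all_boot all_order all_algebra.
Set Implicit Arguments. Unset Strict Implicit. Unset Printing Implicit Defensive.
Import Order.TTheory GRing.Theory Num.Theory.

(* Steps: U = +1, D = -1, C = catastrophe (jump from altitude h > 1 to 0).
   Every step has weight 1, so the length of a path is its number of steps. *)
Inductive step := U | D | C.

Fixpoint valid (h : nat) (p : seq step) : bool :=
  match p with
  | [::] => true
  | U :: q => valid h.+1 q
  | D :: q => (0 < h) && valid h.-1 q
  | C :: q => (1 < h) && valid 0 q
  end.

Fixpoint heights (h : nat) (p : seq step) : seq nat :=
  match p with
  | [::] => [::]
  | U :: q => h.+1 :: heights h.+1 q
  | D :: q => h.-1 :: heights h.-1 q
  | C :: q => 0 :: heights 0 q
  end.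

Definition final_alt (h : nat) (p : seq step) : nat := last h (heights h p).

Definition is_C (s : step) : bool := if s is C then true else false.

Fixpoint all_words (n : nat) : seq (seq step) :=
  match n with
  | 0 => [:: [::]]
  | n'.+1 => [seq s :: w | s <- [:: U; D; C], w <- all_words n']
  end.

Definition classical_dyck (p : seq step) : bool := ~~ has is_C p && valid 0 p.

(* Dyck arch ending with a catastrophe: Dyck path with catastrophes starting at 0,
   last step is a catastrophe, and no visit to altitude 0 strictly between start and end *)
Definition arch_cat (p : seq step) : bool :=
  [&& valid 0 p, ~~ nilp p && is_C (last U p)
    & all (fun h => 0 < h) (heights 0 (take (size p).-1 p))].

Definition a_arch (n : nat) : nat := count arch_cat (all_words n).
Definition meander (n : nat) : nat := count classical_dyck (all_words n).
Definition excursion (n : nat) : nat :=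
  count (fun p => classical_dyck p && (final_alt 0 p == 0)) (all_words n).
Definition meander1 (n : nat) : nat :=
  count (fun p => classical_dyck p && (final_alt 0 p == 1)) (all_words n).

(* formal power series with integer coefficients, as coefficient sequences *)
Local Open Scope ring_scope.
Definition sermul (f g : nat -> int) (n : nat) : int :=
  \sum_(k < n.+1) f k * g (n - k)%N.
Definition polyser (p : {poly int}) : nat -> int := fun n => p`_n.
Definition natser (f : nat -> nat) : nat -> int := fun n => (f n)%:Z.
Definition zshift (f : nat -> int) : nat -> int :=
  fun n => if n is m.+1 then f m else 0.

Definition binomz (n : nat) (k : int) : nat :=
  match k with Posz k' => 'C(n, k') | Negz _ => 0%N end.

(* Main.v *)
Require Import Defs.
From mathcomp Require Import all_boot all_order all_algebra.
From mathcomp Require Import zify ring.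
Import Order.TTheory GRing.Theory Num.Theory.

Lemma count_words (P : pred (seq step)) n :
  count P (all_words n.+1) =
  (count (fun w => P (U :: w)) (all_words n) +
   count (fun w => P (D :: w)) (all_words n) +
   count (fun w => P (C :: w)) (all_words n))%N.
Proof. by rewrite /= !count_cat !count_map /= addn0 addnA. Qed.

Fixpoint Fp (n h : nat) (P : pred nat) : nat :=
  match n with
  | 0 => P h
  | n'.+1 => Fp n' h.+1 P + (if 0 < h then Fp n' h.-1 P else 0)
  end.

Definition cl h p := ~~ has is_C p && valid h p.

Lemma Cnt_Fp n h (P : pred nat) :
  count (fun p => cl h p && P (final_alt h p)) (all_words n) = Fp n h P.
Proof.
elim: n h => [|n IH] h; first by rewrite /= addn0.
rewrite count_words /= -IH.
have -> : count (fun w => cl h (C :: w) && P (final_alt h (C :: w))) (all_words n) = 0.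
  by rewrite (eq_count (a2 := pred0)) ?count_pred0.
rewrite addn0; congr (_ + _).
case: h => [|h] /=.
  by rewrite (eq_count (a2 := pred0)) ?count_pred0 // => w; rewrite /cl /= andbF.
by rewrite -IH.
Qed.

Fixpoint ar (h : nat) (p : seq step) : bool :=
  match p with
  | [::] => false
  | U :: q => ar h.+1 q
  | D :: q => (1 < h) && ar h.-1 q
  | C :: q => (1 < h) && nilp q
  end.

Lemma take_size_cons (x : step) (q : seq step) : ~~ nilp q -> take (size q) (x :: q) = x :: take (size q).-1 q.
Proof. by case: q. Qed.

Lemma last_nonnil (x y : step) (q : seq step) : ~~ nilp q -> last x q = last y q.
Proof. by case: q. Qed.

Lemma ar_gen h p :
  [&& valid h p, ~~ nilp p && is_C (last U p)
    & all (fun h => 0 < h) (heights h (take (size p).-1 p))] = ar h p.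
Proof.
elim: p h => [|x q IH] h //=.
case: (boolP (nilp q)) => [/nilP ->|qn]; first by case: x => //=; rewrite ?andbF ?andbT.
rewrite take_size_cons // (@last_nonnil x U q qn).
case: x => /=.
- by rewrite -IH qn.
- rewrite -IH qn /=; case: h => [|[|h]] //=; by rewrite ?andbF.
- by rewrite !andbF.
Qed.

Lemma arch_ar p : arch_cat p = ar 0 p.
Proof. exact: ar_gen. Qed.

Lemma count_nil n : count (fun q : seq step => nilp q) (all_words n) = (n == 0)%N.
Proof. by case: n => // n; rewrite count_words /= !count_pred0. Qed.

Lemma count_ar h n : count (ar h) (all_words n.+1) =
  (count (ar h.+1) (all_words n) + (if 1 < h then count (ar h.-1) (all_words n) else 0)
   + (if 1 < h then (n == 0)%N else false))%N.
Proof.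
rewrite count_words; case: ifP => h1.
  by rewrite -count_nil; congr (_ + _ + _); apply: eq_count => w /=; rewrite h1.
congr (_ + _ + _); rewrite (eq_count (a2 := pred0)) ?count_pred0 // => w /=; by rewrite h1.
Qed.

Lemma ar_Fp n h : count (ar h.+1) (all_words n.+1) = Fp n h (fun x => 0 < x)%N.
Proof.
elim: n h => [|n IH] h.
  by rewrite count_ar /=; case: h.
rewrite count_ar IH; case: h => [|h]; first by rewrite /= !addn0.
by rewrite IH /= addn0.
Qed.

Lemma Fp_ext n h (P Q : pred nat) : (forall x, P x = Q x) -> Fp n h P = Fp n h Q.
Proof. move=> PQ; elim: n h => [|n IH] h /=; first by rewrite PQ. by rewrite !IH. Qed.

Lemma Fp_add n h (P Q R : pred nat) : (forall x, P x = Q x + R x :> nat) ->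
  Fp n h P = Fp n h Q + Fp n h R.
Proof.
move=> PQ; elim: n h => [|n IH] h /=; first by rewrite PQ.
rewrite !IH; case: ifP => _; lia.
Qed.

Lemma Fp0 n h (P : pred nat) : (forall x, P x = false) -> Fp n h P = 0.
Proof. move=> P0; elim: n h => [|n IH] h /=; first by rewrite P0. by rewrite !IH; case: ifP. Qed.

Lemma Fp_last n h (P : pred nat) :
  Fp n.+1 h P = Fp n h (fun x => P x.+1) + Fp n h (fun x => (0 < x) && P x.-1).
Proof.
elim: n h => [|n IH] h; first by case: h.
rewrite -[LHS]/(Fp n.+1 h.+1 P + (if 0 < h then Fp n.+1 h.-1 P else 0)) !IH /=; case: h => [|h] /=; lia.
Qed.

Definition T n k := Fp n 0 (fun x => k <= x).
Definition Y n k := Fp n 0 (pred1 k).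

Lemma T0 k : T 0 k = (k == 0). Proof. by rewrite /T /=; case: k. Qed.
Lemma Y0 k : Y 0 k = (k == 0). Proof. by rewrite /Y /= eq_sym. Qed.

Lemma TS n k : T n.+1 k = T n k.-1 + T n k.+1.
Proof.
rewrite /T Fp_last; congr (_ + _); apply: Fp_ext => x; case: k => //=; by case: x.
Qed.

Lemma YS n k : Y n.+1 k = (if 0 < k then Y n k.-1 else 0) + Y n k.+1.
Proof.
rewrite /Y Fp_last; congr (_ + _).
  case: k => [|k] /=; first by apply: Fp0.
  by apply: Fp_ext => x /=; rewrite eqSS.
by apply: Fp_ext => x /=; case: x.
Qed.

Lemma T_split n k : T n k = Y n k + T n k.+1.
Proof.
apply: Fp_add => x /=; case: (ltngtP k x) => h //=; by rewrite ?(gtn_eqF h) ?(ltn_eqF h).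
Qed.

Definition Tcf n k := if k <= n then 'C(n, (n - k)./2) else 0.

Lemma H0 n : 'C(n, n./2) + (if 0 < n then 'C(n, (n - 1)./2) else 0) = 'C(n.+1, n.+1./2).
Proof.
case: n => [|n] //=; rewrite subn1 /=.
rewrite -[n](odd_double_half n); move: (n./2) => e.
case: (odd n) => /=.
  rewrite add1n /= uphalf_double doubleK.
  by rewrite -addnn -addnS binS.
rewrite add0n uphalf_double doubleK.
have h := @bin_sub e.*2.+1 e.
rewrite (_ : e.*2.+1 - e = e.+1) in h; last by lia.
by rewrite binS h //; lia.
Qed.

Lemma T_cf n k : T n k = Tcf n k.
Proof.
elim: n k => [|n IH] k; first by rewrite T0 /Tcf; case: k.
rewrite TS !IH /Tcf.
case: k => [|k] /=.
  rewrite !subn0 /=; exact: H0.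
case: (leqP k n) => kn.
  rewrite ltnS kn subSS -(subnKC kn) addKn; move: (n - k) => d.
  case: d => [|[|d]].
  - by rewrite addn0 ltnNge leqnSn /= !bin0.
  - have -> : (k.+1 < k + 1) = false by lia.
    by rewrite /= !bin0.
  have -> : (k.+1 < k + d.+2) = true by lia.
  have -> : k + d.+2 - k.+2 = d by lia.
  by rewrite /= binS addnC.
have -> : (k < n.+1) = false by lia.
have -> : (k.+1 < n) = false by lia.
by [].
Qed.

Lemma conv (X : nat -> nat -> nat) :
  (forall m, X 0 m = (m == 0)) -> (forall n m, X n.+1 m.+1 = X n m + X n m.+2) ->
  forall n j k, X n.+1 (j + k).+1 = \sum_(i < n.+1) X i j * Y (n - i) k.
Proof.
move=> X0 XS n j; elim: n => [|n IH] k.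
  by rewrite big_ord1 XS !X0 ?subnn Y0; case: j; case: k.
rewrite big_ord_recr /= ?subnn Y0.
rewrite (eq_bigr (fun i : 'I_n.+1 => X i j * (if 0 < k then Y (n - i) k.-1 else 0)
                                      + X i j * Y (n - i) k.+1)); last first.
  by move=> i _; rewrite subSn ?YS ?mulnDr // -ltnS ltn_ord.
rewrite big_split /= -IH XS.
case: k => [|k] /=.
  rewrite big1 => [|i _]; last by rewrite muln0.
  by rewrite !addn0 add0n muln1 addn1 addnC.
by rewrite -IH muln0 addn0 !addnS.
Qed.

Lemma T_conv n : T n.+1 2 = \sum_(i < n.+1) T i 1 * Y (n - i) 0.
Proof.
apply: (@conv T (fun m => T0 m) (fun n' m => TS n' m.+1) n 1 0).
Qed.

Lemma Y_conv n : Y n.+2 0 = \sum_(i < n.+1) Y i 0 * Y (n - i) 0.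
Proof.
rewrite YS /= add0n.
apply: (@conv Y (fun m => Y0 m) (fun n' m => YS n' m.+1) n 0 0).
Qed.

Lemma meander_T n : meander n = T n 0.
Proof.
rewrite /meander /T -Cnt_Fp; apply: eq_count => p; by rewrite /classical_dyck /cl andbT.
Qed.

Lemma excursion_Y n : excursion n = Y n 0.
Proof. by rewrite /excursion /Y -Cnt_Fp. Qed.

Lemma meander1_Y n : meander1 n = Y n 1.
Proof. by rewrite /meander1 /Y -Cnt_Fp. Qed.

Lemma a_arch_T n : a_arch n.+2 = T n 1.
Proof.
rewrite /a_arch (eq_count arch_ar) count_ar ar_Fp /= !addn0.
by apply: Fp_ext.
Qed.

Lemma a_arch0 : a_arch 0 = 0. Proof. by []. Qed.
Lemma a_arch1 : a_arch 1 = 0. Proof. by rewrite /a_arch (eq_count arch_ar). Qed.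

Local Open Scope ring_scope.

Definition ts (N : nat) (f : nat -> int) : {poly int} := \poly_(i < N) f i.

Lemma coef_ts N f i : (ts N f)`_i = if (i < N)%N then f i else 0.
Proof. by rewrite /ts coef_poly. Qed.

Lemma L1 (p : {poly int}) f N i : (i < N)%N -> (p * ts N f)`_i = sermul (polyser p) f i.
Proof.
move=> iN; rewrite coefM /sermul; apply: eq_bigr => j _.
by rewrite coef_ts (leq_ltn_trans (leq_subr _ _) iN).
Qed.

Lemma L2 f g N i : (i < N)%N -> (ts N f * ts N g)`_i = sermul f g i.
Proof.
move=> iN; rewrite L1 // /sermul; apply: eq_bigr => j _.
by rewrite /polyser coef_ts (leq_ltn_trans _ iN) // -ltnS.
Qed.

Definition cong N (p q : {poly int}) := exists r, p = q + 'X^N * r.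

Lemma cong_coef N (p q : {poly int}) : (forall i, (i < N)%N -> p`_i = q`_i) -> cong N p q.
Proof.
move=> H; exists (drop_poly N (p - q)).
have := poly_take_drop N (p - q).
have -> : take_poly N (p - q) = 0.
  apply/polyP => i; rewrite coef_take_poly coef0 coefB.
  by case: ifP => // /H ->; rewrite subrr.
by rewrite add0r mulrC => ->; rewrite addrC subrK.
Qed.

Lemma coef_cong N (p q : {poly int}) i : cong N p q -> (i < N)%N -> p`_i = q`_i.
Proof. by case=> r -> iN; rewrite coefD coefXnM iN addr0. Qed.

Lemma lin3 (x y z1 w1 z2 w2 z3 w3 k1 k2 k3 : {poly int}) :
  x - y = k1 * (z1 - w1) + k2 * (z2 - w2) + k3 * (z3 - w3) ->
  z1 = w1 -> z2 = w2 -> z3 = w3 -> x = y.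
Proof.
move=> h e1 e2 e3; apply/eqP; rewrite -subr_eq0 h e1 e2 e3 !subrr !mulr0 !addr0.
by [].
Qed.

Lemma lin2 (x y z1 w1 z2 w2 k1 k2 : {poly int}) :
  x - y = k1 * (z1 - w1) + k2 * (z2 - w2) ->
  z1 = w1 -> z2 = w2 -> x = y.
Proof.
move=> h e1 e2; apply/eqP; rewrite -subr_eq0 h e1 e2 !subrr !mulr0 !addr0.
by [].
Qed.

Definition es (i : nat) : int := (Y i 0)%:Z.
Definition ms (i : nat) : int := (T i 0)%:Z.

Lemma cE N : cong N (ts N es) (1 + 'X^2 * (ts N es * ts N es)).
Proof.
apply: cong_coef => i iN; rewrite coef_ts iN coefD coef1 coefXnM.
case: i iN => [|[|i]] iN //=.
rewrite subn2 /= L2 ?(ltn_trans _ iN) // add0r /es Y_conv.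
rewrite -natz natr_sum; apply: eq_bigr => k _; by rewrite natrM !natz.
Qed.

Lemma cM N : cong N (ts N ms - 'X * ts N ms *+ 2) (1 - 'X * ts N es).
Proof.
apply: cong_coef => i iN; rewrite coefB coefMn coefXM coef_ts iN coefB coef1 coefXM.
case: i iN => [|i] iN /=; first by rewrite /ms T0 subr0.
rewrite !coef_ts (ltn_trans _ iN) // /ms /es TS /= T_split !PoszD.
rewrite T_split PoszD; ring.
Qed.

Lemma cA N : cong N (ts N (natser a_arch)) ('X^2 * (ts N ms - ts N es)).
Proof.
apply: cong_coef => i iN; rewrite coef_ts iN coefXnM.
case: i iN => [|[|i]] iN //=.
rewrite subn2 /= coefB !coef_ts (ltn_trans _ iN) // /natser /ms /es a_arch_T (T_split i 0) PoszD.
ring.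
Qed.

Lemma cS N (c d : {poly int}) (f : nat -> int) :
  cong N (ts N (fun n => sermul (polyser c) f n - polyser d n)) (c * ts N f - d).
Proof.
apply: cong_coef => i iN; by rewrite coef_ts iN coefB L1.
Qed.

Lemma AE n : sermul (natser a_arch) (natser excursion) n.+2 =
  (meander n.+1)%:Z - (excursion n.+1)%:Z - (meander1 n.+1)%:Z.
Proof.
rewrite /sermul big_ord_recl big_ord_recl /natser /= !mul0r !add0r.
rewrite (eq_bigr (fun i : 'I_n.+1 => ((T i 1 * Y (n - i) 0)%N)%:R)); last first.
  by move=> i _; rewrite /bump !add1n !subSS a_arch_T excursion_Y natz PoszM.
rewrite -natr_sum natz -T_conv meander_T excursion_Y meander1_Y.
rewrite (T_split n.+1 0) (T_split n.+1 1) !PoszD; ring.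
Qed.

Theorem proposition3p2 :
  let A := natser a_arch in
  let M := natser meander in
  let E := natser excursion in
  let M1 := natser meander1 in
  (* S(z) := 2(1-2z)A(z) - (2z^2+z-1), which must be the square root with S(0)=1 *)
  let S := fun n => sermul (polyser (2%:P * (1 - 2%:P * 'X))) A n
                    - polyser (2%:P * 'X^2 + 'X - 1) n in
  [/\ a_arch 0 = 0%N /\ a_arch 1 = 0%N,
      (forall n : nat, (2 <= n)%N ->
         a_arch n = binomz (n - 2) ((n%:Z - 3) %/ 2)%Z),
      (* A(z) E(z) = z (M(z) - E(z) - M1(z)) *)
      (forall n : nat, sermul A E n = zshift (fun m => M m - E m - M1 m) n),
      (* 2(1-2z) A(z) = 2z^2 + z - 1 + sqrt((1-2z)(1+2z)(1-z)^2) *)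
      (S 0%N = 1 /\ (forall n : nat,
         sermul S S n = polyser ((1 - 2%:P * 'X) * (1 + 2%:P * 'X) * (1 - 'X) ^+ 2) n))
    & [seq a_arch n | n <- iota 0 10] = [:: 0; 0; 0; 1; 1; 3; 4; 10; 15; 35]%N].
Proof.
move=> A M E M1 S.
have Ha n : a_arch n.+2 = if (1 <= n)%N then 'C(n, (n - 1)./2) else 0%N.
  by rewrite a_arch_T T_cf.
split.
- by [].
- case=> [|[|n]] // _.
  case: n => [|n]; first by vm_compute.
  rewrite Ha.
  have -> : ((n.+3)%:Z - 3 = n%:Z)%Z by lia.
  rewrite divz_nat /binomz (_ : (n.+3 - 2)%N = n.+1) // subn1 /= divn2.
  by [].
- case=> [|n].
    by rewrite /sermul big_ord1 /A /natser /= mul0r.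
  case: n => [|n]; first by rewrite /sermul !big_ord_recl big_ord0 /A /E /M /M1 /natser /=.
  exact: AE.
- split.
    rewrite /S /sermul big_ord1 /A /natser /polyser /= subnn a_arch0 mulr0 !coefE /=.
    by rewrite mulr0 !add0r opprK.
  move=> n; set N := n.+1.
  have [rE hE] := cE N.
  have [rM hM] := cM N.
  have [rA hA] := cA N.
  have [rS hS] := cS N (2%:P * (1 - 2%:P * 'X)) (2%:P * 'X^2 + 'X - 1) A.
  have hS' : ts N S = 2%:P * (1 - 2%:P * 'X) * ts N A - (2%:P * 'X^2 + 'X - 1) + 'X^N * rS := hS.
  have hQ : ts N S = (1 - 'X) * (1 - 2%:P * 'X^2 * ts N es) + 'X^N * (rS + 2%:P * (1 - 2%:P * 'X) * rA + 2%:P * 'X^2 * rM).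
    apply: (@lin3 _ _ _ _ _ _ _ _ 1 (2%:P * (1 - 2%:P * 'X)) (2%:P * 'X^2) _ hS' hA hM).
    rewrite !polyC_natr; ring.
  set r1 := (rS + _ + _) in hQ.
  set Q := (1 - 'X) * _ in hQ.
  have hF : ts N S * ts N S = (1 - 2%:P * 'X) * (1 + 2%:P * 'X) * (1 - 'X) ^+ 2
            + 'X^N * (r1 * (2%:R * Q + 'X^N * r1) - 4%:R * 'X^2 * (1 - 'X)^+2 * rE).
    apply: (@lin2 _ _ _ _ _ _ (ts N S + Q + 'X^N * r1) (- 4%:R * 'X^2 * (1 - 'X)^+2) _ hQ hE).
    rewrite /Q !polyC_natr; ring.
  by rewrite /polyser -(@L2 S S N n (ltnSn n)) hF coefD coefXnM ltnSn addr0.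
- by rewrite /= !Ha.
Qed.
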